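(* Let $(X,\mathcal A,\mu,\mu^{\otimes2},R,I,\Pi_R,G,E_0,\eta)$ be a pre-structural datum satisfying Axioms I and II, with $\mu(X)\le M<\infty$, and let $\eta\in[0,1)$. Let $\mathcal B$ be the Banach space of bounded finitely additive real-valued set functions $f:\mathcal A\to\mathbb R$ with norm $\|f\|_\infty=\sup_{B\in\mathcal A}|f(B)|$, and define $T_\eta:\mathcal B\to\mathcal B$ by $(T_\eta f)(B)=\mu(B)+\eta\,f(\Pi_R^{-1}(B))$ for $B\in\mathcal A$. Then the equation $f=T_\eta f$ has a unique solution $f_*\in\mathcal B$, given by \[f_*(B)=\mu(B)+\frac{\eta}{1-\eta}\,\mu(\Pi_R^{-1}(B))\qquad(B\in\mathcal A).\] Moreover $f_*\ge 0$ on $\mathcal A$, and for every $f_0\in\mathcal B$ the iterates $f_n:=T_\eta^n f_0$ satisfy $\|f_n-f_*\|_\infty\le\eta^n\|f_0-f_*\|_\infty$, so $f_n\to f_*$ in norm.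
   Context: For a nonempty set $X$, an algebra $\mathcal A\subseteq\mathcal P(X)$ contains $\varnothing,X$ and is closed under finite unions and complements. A finitely additive measure $\mu:\mathcal A\to[0,\infty)$ satisfies $\mu(\varnothing)=0$ and $\mu(B_1\sqcup B_2)=\mu(B_1)+\mu(B_2)$ for disjoint $B_1,B_2\in\mathcal A$. $\mathcal A\otimes\mathcal A$ denotes the algebra generated by rectangles $B_1\times B_2$, $B_i\in\mathcal A$. For relations $H,K\subseteq X\times X$, $H\circ K=\{(x,z):\exists y\,(x,y)\in H,(y,z)\in K\}$. A pre-structural datum is a tuple $(X,\mathcal A,\mu,\mu^{\otimes2},R,I,\Pi_R,G,E_0,\eta)$ where: $X$ nonempty; $\mathcal A$ an algebra on $X$; $\mu$ a finitely additive measure on $\mathcal A$; $\mu^{\otimes2}:\mathcal A\otimes\mathcal A\to[0,\infty)$ finitely additive with $\mu^{\otimes2}(B_1\times B_2)=\mu(B_1)\mu(B_2)$; $R,I\in\mathcal A$ disjoint; $\Pi_R:X\to R$ a map; $G\in\mathcal A\otimes\mathcal A$; $E_0\in(0,\infty)$; $\eta\in[0,1]$. Axiom I: $\Pi_R\circ\Pi_R=\Pi_R$, $\Pi_R(r)=r$ for all $r\in R$, and $\Pi_R^{-1}(B)\in\mathcal A$ for every $B\in\mathcal A$ with $B\subseteq R$ (hence $\Pi_R^{-1}(B)=\Pi_R^{-1}(B\cap R)\in\mathcal A$ for all $B\in\mathcal A$). Axiom II: $G$ is reflexive, symmetric, and $G\circ G=G$. *)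

(* Defs.v *)
From Stdlib Require Import Reals.
From Coquelicot Require Import Coquelicot.
Open Scope R_scope.

Definition set (T : Type) := T -> Prop.
Definition setU {T} (A B : set T) : set T := fun x => A x \/ B x.
Definition setC {T} (A : set T) : set T := fun x => ~ A x.
Definition set0 {T} : set T := fun _ => False.
Definition setT {T} : set T := fun _ => True.
Definition disjoint {T} (A B : set T) : Prop := forall x, A x -> B x -> False.
Definition subset {T} (A B : set T) : Prop := forall x, A x -> B x.
Definition preimage {T U} (f : T -> U) (B : set U) : set T := fun x => B (f x).

Definition is_algebra {T} (A : set (set T)) : Prop :=
  A set0 /\ A setT /\
  (forall B1 B2, A B1 -> A B2 -> A (setU B1 B2)) /\
  (forall B, A B -> A (setC B)).

Definition fa_measure {T} (A : set (set T)) (mu : set T -> R) : Prop :=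
  (forall B, A B -> 0 <= mu B) /\ mu set0 = 0 /\
  (forall B1 B2, A B1 -> A B2 -> disjoint B1 B2 ->
     mu (setU B1 B2) = mu B1 + mu B2).

Definition rectangle {X} (B1 B2 : set X) : set (X * X) :=
  fun p => B1 (fst p) /\ B2 (snd p).
Definition prod_algebra {X} (A : set (set X)) : set (set (X * X)) :=
  fun C => forall (F : set (set (X * X))), is_algebra F ->
     (forall B1 B2, A B1 -> A B2 -> F (rectangle B1 B2)) -> F C.

Definition rel_comp {X} (H K : set (X * X)) : set (X * X) :=
  fun p => exists y, H (fst p, y) /\ K (y, snd p).

(* Pre-structural datum (X, A, mu, mu2, Rset, Iset, Pi, G, E0, eta);
   Pi : X -> R is encoded as Pi : X -> X with values in Rset. *)
Definition pre_structural_datum {X : Type} (A : set (set X)) (mu : set X -> R)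
  (mu2 : set (X * X) -> R) (Rset Iset : set X) (Pi : X -> X)
  (G : set (X * X)) (E0 eta : R) : Prop :=
  is_algebra A /\ fa_measure A mu /\
  fa_measure (prod_algebra A) mu2 /\
  (forall B1 B2, A B1 -> A B2 -> mu2 (rectangle B1 B2) = mu B1 * mu B2) /\
  A Rset /\ A Iset /\ disjoint Rset Iset /\
  (forall x, Rset (Pi x)) /\
  prod_algebra A G /\ 0 < E0 /\ 0 <= eta <= 1.

Definition axiom_I {X : Type} (A : set (set X)) (Rset : set X) (Pi : X -> X) :=
  (forall x, Pi (Pi x) = Pi x) /\
  (forall r, Rset r -> Pi r = r) /\
  (forall B, A B -> subset B Rset -> A (preimage Pi B)).

Definition axiom_II {X : Type} (G : set (X * X)) :=
  (forall x, G (x, x)) /\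
  (forall x y, G (x, y) -> G (y, x)) /\
  (forall p, rel_comp G G p <-> G p).

(* The space B: bounded finitely additive real set functions on A.
   Elements are represented as functions on all subsets; only their
   values on A matter. *)
Definition in_Bspace {X} (A : set (set X)) (f : set X -> R) : Prop :=
  (exists C, forall B, A B -> Rabs (f B) <= C) /\
  (forall B1 B2, A B1 -> A B2 -> disjoint B1 B2 ->
     f (setU B1 B2) = f B1 + f B2).

Definition supnorm {X} (A : set (set X)) (f : set X -> R) : R :=
  real (Lub_Rbar (fun r => exists B, A B /\ r = Rabs (f B))).

Definition T_op {X} (mu : set X -> R) (Pi : X -> X) (eta : R)
  (f : set X -> R) : set X -> R :=
  fun B => mu B + eta * f (preimage Pi B).

Definition T_iter {X} (mu : set X -> R) (Pi : X -> X) (eta : R)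
  (n : nat) (f0 : set X -> R) : set X -> R :=
  Nat.iter n (T_op mu Pi eta) f0.

(* Main.v *)
Require Import Defs.
From Stdlib Require Import Reals Lra Classical FunctionalExtensionality PropExtensionality.
From Coquelicot Require Import Coquelicot.
Open Scope R_scope.

Lemma supnorm_le {X} (A : set (set X)) (h : set X -> R) (K : R) :
  (exists B, A B) -> (forall B, A B -> Rabs (h B) <= K) -> supnorm A h <= K.
Proof.
  intros [B0 HB0] HK. unfold supnorm.
  destruct (Lub_Rbar_correct (fun r => exists B, A B /\ r = Rabs (h B))) as [Hub Hl].
  assert (H1 : Rbar_le (Lub_Rbar (fun r => exists B, A B /\ r = Rabs (h B))) (Finite K)).
  { apply Hl. intros x [B [HB ->]]. simpl. apply HK; auto. }
  assert (H2 : Rbar_le (Finite (Rabs (h B0))) (Lub_Rbar (fun r => exists B, A B /\ r = Rabs (h B)))).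
  { apply Hub. eauto. }
  destruct (Lub_Rbar _); simpl in *; auto; contradiction.
Qed.

Lemma supnorm_ge {X} (A : set (set X)) (h : set X -> R) (C : R) B :
  (forall B, A B -> Rabs (h B) <= C) -> A B -> Rabs (h B) <= supnorm A h.
Proof.
  intros HK HB. unfold supnorm.
  destruct (Lub_Rbar_correct (fun r => exists B, A B /\ r = Rabs (h B))) as [Hub Hl].
  assert (H1 : Rbar_le (Lub_Rbar (fun r => exists B, A B /\ r = Rabs (h B))) (Finite C)).
  { apply Hl. intros x [B' [HB' ->]]. simpl. apply HK; auto. }
  assert (H2 : Rbar_le (Finite (Rabs (h B))) (Lub_Rbar (fun r => exists B, A B /\ r = Rabs (h B)))).
  { apply Hub. eauto. }
  destruct (Lub_Rbar _); simpl in *; auto; contradiction.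
Qed.

Theorem theorem4p8 (X : Type) (x0 : X) (A : set (set X)) (mu : set X -> R)
  (mu2 : set (X * X) -> R) (Rset Iset : set X) (Pi : X -> X)
  (G : set (X * X)) (E0 eta M : R) :
  pre_structural_datum A mu mu2 Rset Iset Pi G E0 eta ->
  axiom_I A Rset Pi -> axiom_II G ->
  mu setT <= M -> 0 <= eta < 1 ->
  let fstar : set X -> R :=
    fun B => mu B + eta / (1 - eta) * mu (preimage Pi B) in
  (* existence: f_* lies in B and is a fixed point of T_eta *)
  (in_Bspace A fstar /\ (forall B, A B -> fstar B = T_op mu Pi eta fstar B)) /\
  (* uniqueness in B *)
  (forall f, in_Bspace A f ->
     (forall B, A B -> f B = T_op mu Pi eta f B) ->
     forall B, A B -> f B = fstar B) /\
  (* nonnegativity *)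
  (forall B, A B -> 0 <= fstar B) /\
  (* geometric convergence of the iterates *)
  (forall f0, in_Bspace A f0 ->
     (forall n, supnorm A (fun B => T_iter mu Pi eta n f0 B - fstar B)
                <= eta ^ n * supnorm A (fun B => f0 B - fstar B)) /\
     is_lim_seq (fun n => supnorm A (fun B => T_iter mu Pi eta n f0 B - fstar B)) 0).
Proof.
  intros HD HI _ _ Heta fstar.
  assert (Hfs : forall B, fstar B = mu B + eta / (1 - eta) * mu (preimage Pi B)) by reflexivity.
  clearbody fstar.
  destruct HD as [HA [Hmu [_ [_ [HR [_ [_ [HPiR _]]]]]]]].
  destruct HA as [A0 [AT [AU AC]]].
  destruct Hmu as [mu0 [mus0 muadd]].
  destruct HI as [PiPi [_ Apre]].
  assert (Apre' : forall B, A B -> A (preimage Pi B)).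
  { intros B HB.
    set (D := setC (setU (setC B) (setC Rset))).
    assert (HDA : A D) by (apply AC, AU; apply AC; auto).
    assert (HDs : subset D Rset).
    { intros x Hx. apply NNPP. intro Hn. apply Hx. right. exact Hn. }
    assert (E : preimage Pi D = preimage Pi B).
    { extensionality x. apply propositional_extensionality. unfold preimage, D, setC, setU.
      split.
      - intro H. apply NNPP. intro Hn. apply H. left. exact Hn.
      - intros H [H'|H']; auto. }
    rewrite <- E. apply Apre; auto. }
  assert (pre2 : forall B, preimage Pi (preimage Pi B) = preimage Pi B).
  { intro B. unfold preimage. extensionality x. rewrite PiPi. reflexivity. }
  assert (mupos : forall B, A B -> 0 <= mu B) by exact mu0.
  assert (mule : forall B, A B -> mu B <= mu setT).
  { intros B HB.
    assert (E : setU B (setC B) = setT).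
    { extensionality x. apply propositional_extensionality. unfold setU, setC, setT.
      split; auto. intros _. apply classic. }
    rewrite <- E. rewrite muadd; auto.
    - pose proof (mupos (setC B) (AC B HB)); lra.
    - intros x H1 H2. auto. }
  assert (Hne : 1 - eta > 0) by lra.
  assert (fixall : forall B, fstar B = T_op mu Pi eta fstar B).
  { intro B. unfold T_op. rewrite !Hfs, pre2. field. lra. }
  assert (fsbound : forall B, A B -> Rabs (fstar B) <= mu setT + eta / (1 - eta) * mu setT).
  { intros B HB. rewrite Hfs.
    pose proof (mupos B HB). pose proof (mupos _ (Apre' B HB)).
    pose proof (mule B HB). pose proof (mule _ (Apre' B HB)).
    assert (0 <= eta / (1 - eta)) by (apply Rdiv_le_0_compat; lra).
    rewrite Rabs_right.
    - apply Rplus_le_compat; auto. apply Rmult_le_compat_l; auto.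
    - apply Rle_ge. apply Rplus_le_le_0_compat; auto. apply Rmult_le_pos; auto. }
  split; [split|split; [|split]].
  - split.
    + exists (mu setT + eta / (1 - eta) * mu setT). exact fsbound.
    + intros B1 B2 H1 H2 Hd. rewrite !Hfs. rewrite muadd; auto.
      change (preimage Pi (setU B1 B2)) with (setU (preimage Pi B1) (preimage Pi B2)).
      rewrite muadd; auto. ring.
      intros x a b. exact (Hd _ a b).
  - intros B _. apply fixall.
  - intros f _ Hf B HB.
    pose proof (Hf _ (Apre' B HB)) as H1. unfold T_op in H1. rewrite pre2 in H1.
    rewrite (Hf B HB). unfold T_op. rewrite Hfs.
    assert (f (preimage Pi B) = mu (preimage Pi B) / (1 - eta)).
    { field_simplify_eq; lra. }
    rewrite H. field. lra.
  - intros B HB. rewrite Hfs. pose proof (mupos B HB). pose proof (mupos _ (Apre' B HB)).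
    assert (0 <= eta / (1 - eta)) by (apply Rdiv_le_0_compat; lra).
    apply Rplus_le_le_0_compat; auto. apply Rmult_le_pos; auto.
  - intros f0 [[C HC] _].
    set (s0 := supnorm A (fun B => f0 B - fstar B)).
    assert (Hs0 : forall B, A B -> Rabs (f0 B - fstar B) <= s0).
    { intros B HB. apply (supnorm_ge A (fun B => f0 B - fstar B) (C + (mu setT + eta / (1 - eta) * mu setT))); auto.
      intros B' HB'.
      pose proof (HC _ HB'). pose proof (fsbound _ HB').
      cbv beta. pose proof (Rabs_triang (f0 B') (- fstar B')) as Ht. rewrite Rabs_Ropp in Ht. change (f0 B' - fstar B') with (f0 B' + - fstar B'). lra. }
    assert (s0pos : 0 <= s0).
    { eapply Rle_trans; [apply Rabs_pos|]. apply (Hs0 set0 A0). }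
    assert (Hn : forall n B, A B -> Rabs (T_iter mu Pi eta n f0 B - fstar B) <= eta ^ n * s0).
    { induction n as [|n IH]; intros B HB.
      - simpl. rewrite Rmult_1_l. apply Hs0; auto.
      - change (T_iter mu Pi eta (S n) f0 B) with (T_op mu Pi eta (T_iter mu Pi eta n f0) B).
        rewrite (fixall B). unfold T_op.
        replace (mu B + eta * T_iter mu Pi eta n f0 (preimage Pi B) -
                 (mu B + eta * fstar (preimage Pi B)))
          with (eta * (T_iter mu Pi eta n f0 (preimage Pi B) - fstar (preimage Pi B))) by ring.
        rewrite Rabs_mult, Rabs_right by lra. simpl. rewrite Rmult_assoc.
        apply Rmult_le_compat_l; [lra|]. apply IH; auto. }
    assert (Hsn : forall n, supnorm A (fun B => T_iter mu Pi eta n f0 B - fstar B) <= eta ^ n * s0).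
    { intro n. apply supnorm_le; eauto. }
    split; auto.
    apply is_lim_seq_le_le with (u := fun _ => 0) (w := fun n => eta ^ n * s0).
    + intro n. split; auto.
      eapply Rle_trans; [apply Rabs_pos|].
      apply (supnorm_ge A _ (eta ^ n * s0) set0); auto.
    + apply is_lim_seq_const.
    + replace (Finite 0) with (Rbar_mult 0 s0) by (simpl; f_equal; ring).
      apply is_lim_seq_scal_r. apply is_lim_seq_geom. rewrite Rabs_right; lra.
Qed.
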